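(* For the two-user MIMO interference channel of the context with a fixed channel realization $H$ (known at all nodes), the Han–Kobayashi scheme $\mathcal{HK}(K_{11},K_{12},K_{21},K_{22})$ with $$K_{i1}=\tfrac12 I_{M_i},\qquad K_{i2}=\tfrac12\left(I_{M_i}+\rho_{ij}H_{ij}^\dagger H_{ij}\right)^{-1}\quad(i\ne j)$$ achieves every rate pair $(R_1,R_2)$ with $R_1,R_2\ge0$ belonging to $\mathcal{R}^c(H,\bar\rho)-(2N_1,2N_2)$.
   Context: Channel: transmitter $i\in\{1,2\}$ has $M_i$ antennas, receiver $j$ has $N_j$ antennas, $H_{ij}\in\mathbb{C}^{N_j\times M_i}$ from transmitter $i$ to receiver $j$; $Y_1=\sqrt{\rho_{11}}H_{11}X_1+\sqrt{\rho_{21}}H_{21}X_2+Z_1$, $Y_2=\sqrt{\rho_{12}}H_{12}X_1+\sqrt{\rho_{22}}H_{22}X_2+Z_2$, $Z_j$ i.i.d. $\mathcal{CN}(0,I_{N_j})$, power constraint $\mathrm{tr}(\mathbb{E}[X_iX_i^\dagger])\le M_i$. Han–Kobayashi scheme $\mathcal{HK}(K_{11},K_{12},K_{21},K_{22})$: each user splits its message into a public part and a private part, encoded by independent random Gaussian codebooks; the transmitted signal is $X_i=U_i+W_i$ with $W_i\sim\mathcal{CN}(0,K_{i1})$ (public) and $U_i\sim\mathcal{CN}(0,K_{i2})$ (private) independent; each receiver decodes its own public and private messages together with the other user's public message, treating the other user's private signal as noise. Logs base 2; $P_{ij}=I_{M_i}+\rho_{ij}H_{ij}^\dagger H_{ij}$.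 $\mathcal{R}^c(H,\bar\rho)$ is the set of $(R_1,R_2)$, $R_1,R_2\ge0$, with $R_i\le\log|I_{N_i}+\rho_{ii}H_{ii}H_{ii}^\dagger|$ ($i=1,2$); $R_1+R_2\le\log|I_{N_2}+\rho_{12}H_{12}H_{12}^\dagger+\rho_{22}H_{22}H_{22}^\dagger|+\log|I_{N_1}+\rho_{11}H_{11}P_{12}^{-1}H_{11}^\dagger|$; $R_1+R_2\le\log|I_{N_1}+\rho_{21}H_{21}H_{21}^\dagger+\rho_{11}H_{11}H_{11}^\dagger|+\log|I_{N_2}+\rho_{22}H_{22}P_{21}^{-1}H_{22}^\dagger|$; $R_1+R_2\le\log|I_{N_1}+\rho_{11}H_{11}P_{12}^{-1}H_{11}^\dagger+\rho_{21}H_{21}H_{21}^\dagger|+\log|I_{N_2}+\rho_{12}H_{12}H_{12}^\dagger+\rho_{22}H_{22}P_{21}^{-1}H_{22}^\dagger|$; $2R_1+R_2\le\log|I_{N_1}+\rho_{21}H_{21}H_{21}^\dagger+\rho_{11}H_{11}H_{11}^\dagger|+\log|I_{N_2}+\rho_{12}H_{12}H_{12}^\dagger+\rho_{22}H_{22}P_{21}^{-1}H_{22}^\dagger|+\log|I_{N_1}+\rho_{11}H_{11}P_{12}^{-1}H_{11}^\dagger|$; $R_1+2R_2\le\log|I_{N_2}+\rho_{12}H_{12}H_{12}^\dagger+\rho_{22}H_{22}H_{22}^\dagger|+\log|I_{N_1}+\rho_{21}H_{21}H_{21}^\dagger+\rho_{11}H_{11}P_{12}^{-1}H_{11}^\dagger|+\log|I_{N_2}+\rho_{22}H_{22}P_{21}^{-1}H_{22}^\dagger|$.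 $\mathcal{R}-(c_1,c_2)=\{(R_1-c_1,R_2-c_2):(R_1,R_2)\in\mathcal{R}\}$. *)

(* Defs.v *)
From HB Require Import structures.
From mathcomp Require Import all_boot all_order all_algebra.
From mathcomp Require Import complex.
From mathcomp Require Import reals exp.
Set Implicit Arguments. Unset Strict Implicit. Unset Printing Implicit Defensive.
Import Order.TTheory GRing.Theory Num.Theory.
Local Open Scope ring_scope.

Section MIMO.
Variable R : realType.
Local Notation C := (R[i]).

Definition ctr (m n : nat) (A : 'M[C]_(m, n)) : 'M[C]_(n, m) := map_mx (@conjc R) A^T.

(* log base 2 of the determinant of a (Hermitian positive definite) matrix;
   its determinant is real, we take its real part *)
Definition log2 (x : R) : R := ln x / ln 2.
Definition logdet (n : nat) (A : 'M[C]_n) : R := log2 (complex.Re (\det A)).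

Definition gram (n m : nat) (rho : R) (H : 'M[C]_(n, m)) (K : 'M[C]_m) : 'M[C]_n :=
  (rho%:C)%C *: (H *m K *m ctr H).

Definition Pmx (n m : nat) (rho : R) (H : 'M[C]_(n, m)) : 'M[C]_m :=
  1%:M + (rho%:C)%C *: (ctr H *m H).

(* Channel: Hij : 'M_(N_j, M_i) from transmitter i to receiver j. *)

Definition Rc (M1 M2 N1 N2 : nat)
  (H11 : 'M[C]_(N1, M1)) (H12 : 'M[C]_(N2, M1))
  (H21 : 'M[C]_(N1, M2)) (H22 : 'M[C]_(N2, M2))
  (r11 r12 r21 r22 : R) (r : R * R) : Prop :=
  let R1 := r.1 in let R2 := r.2 in
  let I1 : 'M[C]_N1 := 1%:M in let I2 : 'M[C]_N2 := 1%:M in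
  let iP12 := invmx (Pmx r12 H12) in let iP21 := invmx (Pmx r21 H21) in
  (0 <= R1) /\ (0 <= R2) /\
      R1 <= logdet (I1 + gram r11 H11 1%:M) /\
      R2 <= logdet (I2 + gram r22 H22 1%:M) /\
      R1 + R2 <= logdet (I2 + gram r12 H12 1%:M + gram r22 H22 1%:M)
                 + logdet (I1 + gram r11 H11 iP12) /\
      R1 + R2 <= logdet (I1 + gram r21 H21 1%:M + gram r11 H11 1%:M)
                 + logdet (I2 + gram r22 H22 iP21) /\
      R1 + R2 <= logdet (I1 + gram r11 H11 iP12 + gram r21 H21 1%:M)
                 + logdet (I2 + gram r12 H12 1%:M + gram r22 H22 iP21) /\
      R1 *+ 2 + R2 <= logdet (I1 + gram r21 H21 1%:M + gram r11 H11 1%:M)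
                 + logdet (I2 + gram r12 H12 1%:M + gram r22 H22 iP21)
                 + logdet (I1 + gram r11 H11 iP12) /\
      R1 + R2 *+ 2 <= logdet (I2 + gram r12 H12 1%:M + gram r22 H22 1%:M)
                 + logdet (I1 + gram r21 H21 1%:M + gram r11 H11 iP12)
                 + logdet (I2 + gram r22 H22 iP21).

Definition shift_region (S : R * R -> Prop) (c1 c2 : R) (r : R * R) : Prop :=
  exists r' : R * R, S r' /\ r = (r'.1 - c1, r'.2 - c2).

(* Rate region achieved by the Han-Kobayashi scheme HK(K11,K12,K21,K22) with
   independent Gaussian codebooks: W_i ~ CN(0,K_i1) public, U_i ~ CN(0,K_i2)
   private, X_i = U_i + W_i; receiver j decodes (W_j, U_j, W_i) treating U_i
   as noise.  This is the (Chong-Motani-Garg form of the) Han-Kobayashi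
   achievable region, with the mutual informations evaluated for Gaussian
   inputs:
     a1 = I(Y1;X1|W2), b1 = I(Y1;X1,W2), c1 = I(Y1;X1|W1,W2),
     d1 = I(Y1;X1,W2|W1), and symmetrically at receiver 2. *)
Definition HK_region (M1 M2 N1 N2 : nat)
  (H11 : 'M[C]_(N1, M1)) (H12 : 'M[C]_(N2, M1))
  (H21 : 'M[C]_(N1, M2)) (H22 : 'M[C]_(N2, M2))
  (r11 r12 r21 r22 : R)
  (K11 K12 : 'M[C]_M1) (K21 K22 : 'M[C]_M2) (r : R * R) : Prop :=
  let R1 := r.1 in let R2 := r.2 in
  (* noise-plus-interference covariances (other user's private part = noise) *)
  let S1 : 'M[C]_N1 := 1%:M + gram r21 H21 K22 in
  let S2 : 'M[C]_N2 := 1%:M + gram r12 H12 K12 in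
  let a1 := logdet (S1 + gram r11 H11 (K11 + K12)) - logdet S1 in
  let b1 := logdet (S1 + gram r11 H11 (K11 + K12) + gram r21 H21 K21) - logdet S1 in
  let c1 := logdet (S1 + gram r11 H11 K12) - logdet S1 in
  let d1 := logdet (S1 + gram r11 H11 K12 + gram r21 H21 K21) - logdet S1 in
  let a2 := logdet (S2 + gram r22 H22 (K21 + K22)) - logdet S2 in
  let b2 := logdet (S2 + gram r22 H22 (K21 + K22) + gram r12 H12 K11) - logdet S2 in
  let c2 := logdet (S2 + gram r22 H22 K22) - logdet S2 in
  let d2 := logdet (S2 + gram r22 H22 K22 + gram r12 H12 K11) - logdet S2 in
  (0 <= R1) /\ (0 <= R2) /\
      R1 <= a1 /\ R2 <= a2 /\
      R1 + R2 <= b1 + c2 /\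
      R1 + R2 <= b2 + c1 /\
      R1 + R2 <= d1 + d2 /\
      R1 *+ 2 + R2 <= b1 + c1 + d2 /\
      R1 + R2 *+ 2 <= b2 + c2 + d1.

End MIMO.

(* Main.v *)
Require Import Defs.
From HB Require Import structures.
From mathcomp Require Import all_boot all_order all_algebra.
From mathcomp Require Import complex.
From mathcomp Require Import reals exp.
From mathcomp Require Import ring lra.
Import Order.TTheory GRing.Theory Num.Theory.
Local Open Scope ring_scope.
Set Implicit Arguments. Unset Strict Implicit. Unset Printing Implicit Defensive.
Section S.
Variable R : realType.
Local Notation C := (R[i]).

Lemma ctrK m n (A : 'M[C]_(m,n)) : ctr (ctr A) = A.
Proof. by apply/matrixP=> i j; rewrite /ctr !mxE conjcK. Qed.
Lemma ctrM m n p (A : 'M[C]_(m,n)) (B : 'M[C]_(n,p)) : ctr (A *m B) = ctr B *m ctr A.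
Proof. by rewrite /ctr trmx_mul map_mxM. Qed.
Lemma ctrD m n (A B : 'M[C]_(m,n)) : ctr (A + B) = ctr A + ctr B.
Proof. by rewrite /ctr raddfD /= map_mxD. Qed.
Lemma ctrN m n (A : 'M[C]_(m,n)) : ctr (- A) = - ctr A.
Proof. by rewrite /ctr raddfN /= map_mxN. Qed.
Lemma ctrB m n (A B : 'M[C]_(m,n)) : ctr (A - B) = ctr A - ctr B.
Proof. by rewrite ctrD ctrN. Qed.
Lemma ctrZ m n (c : C) (A : 'M[C]_(m,n)) : ctr (c *: A) = conjc c *: ctr A.
Proof. by rewrite /ctr linearZ /= map_mxZ. Qed.
Lemma ctr_scalar n (c : C) : ctr (c%:M : 'M_n) = (conjc c)%:M.
Proof. by rewrite /ctr tr_scalar_mx map_scalar_mx. Qed.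
Lemma ctr1 n : ctr (1%:M : 'M[C]_n) = 1%:M.
Proof. by rewrite ctr_scalar conjc1. Qed.
Lemma ctr_block m1 m2 n1 n2 (a : 'M[C]_(m1,n1)) (b : 'M[C]_(m1,n2)) (c : 'M[C]_(m2,n1)) (d : 'M[C]_(m2,n2)) :
  ctr (block_mx a b c d) = block_mx (ctr a) (ctr c) (ctr b) (ctr d).
Proof. by rewrite /ctr tr_block_mx map_block_mx. Qed.
Lemma ctr_col m1 m2 n (a : 'M[C]_(m1,n)) (b : 'M[C]_(m2,n)) :
  ctr (col_mx a b) = row_mx (ctr a) (ctr b).
Proof. by rewrite /ctr tr_col_mx map_row_mx. Qed.
Lemma ctr_inv n (A : 'M[C]_n) : ctr (invmx A) = invmx (ctr A).
Proof. by rewrite /ctr trmx_inv map_invmx. Qed.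

Definition herm n (A : 'M[C]_n) := ctr A = A.
Definition qf n (A : 'M[C]_n) (x : 'cV[C]_n) : C := (ctr x *m A *m x) 0 0.
Definition psd n (A : 'M[C]_n) := herm A /\ forall x, 0 <= qf A x.
Definition pd n (A : 'M[C]_n) := herm A /\ forall x, x != 0 -> 0 < qf A x.

Lemma qfD n (A B : 'M[C]_n) x : qf (A + B) x = qf A x + qf B x.
Proof. by rewrite /qf mulmxDr mulmxDl mxE. Qed.
Lemma qfN n (A : 'M[C]_n) x : qf (- A) x = - qf A x.
Proof. by rewrite /qf mulmxN mulNmx mxE. Qed.
Lemma qfB n (A B : 'M[C]_n) x : qf (A - B) x = qf A x - qf B x.
Proof. by rewrite qfD qfN. Qed.
Lemma qfZ n (c : C) (A : 'M[C]_n) x : qf (c *: A) x = c * qf A x.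
Proof. by rewrite /qf -scalemxAr -scalemxAl mxE. Qed.
Lemma qf1 n (x : 'cV[C]_n) : qf 1%:M x = \sum_j x j 0 * conjc (x j 0).
Proof. rewrite /qf mulmx1 mxE; apply: eq_bigr => j _; rewrite !mxE mulrC. done. Qed.

Lemma mulcJ_gt0 (z : C) : z != 0 -> 0 < z * conjc z.
Proof. move=> nz; rewrite lt_def mulcJ_ge0 andbT mulf_neq0 // conjc_eq0 //. Qed.

Lemma qf1_ge0 n (x : 'cV[C]_n) : 0 <= qf 1%:M x.
Proof. rewrite qf1; apply: sumr_ge0 => j _; exact: mulcJ_ge0. Qed.
Lemma qf1_gt0 n (x : 'cV[C]_n) : x != 0 -> 0 < qf 1%:M x.
Proof.
move=> nz; have [j Hj] : exists j, x j 0 != 0.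
  apply/existsP; move: nz; apply: contraR; rewrite negb_exists => /forallP H.
  apply/eqP/matrixP => i k; rewrite (ord1 k) mxE; exact/eqP/negbNE/H.
rewrite qf1 (bigD1 j) //= ltr_pwDl ?mulcJ_gt0 //.
by apply: sumr_ge0 => i _; exact: mulcJ_ge0.
Qed.
End S.

Section S2.
Variable R : realType.
Local Notation C := (R[i]).
Lemma qf_block n (a : 'M[C]_1) (c : 'M[C]_(1,n)) (D : 'M[C]_n) (t : C) (x : 'cV[C]_n) :
  qf (block_mx a c (ctr c) D) (col_mx t%:M x) =
  conjc t * a 0 0 * t + conjc t * (c *m x) 0 0 + conjc ((c *m x) 0 0) * t + qf D x.
Proof.
rewrite /qf ctr_col ctr_scalar mul_row_block mul_row_col !mulmxDl.
rewrite !mul_scalar_mx mul_mx_scalar -!scalemxAl -ctrM.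
rewrite [LHS]mxE [X in X + _ = _]mxE [X in _ + X = _]mxE.
have E1 : forall k (M : 'M[C]_(1,k)) (s : C) j, (s *: M) 0 j = s * M 0 j.
  by move=> *; rewrite mxE.
rewrite mul_mx_scalar !E1 /ctr !mxE.
ring.
Qed.
End S2.

Section S3.
Variable R : realType.
Local Notation C := (R[i]).

Lemma ctrE m n (M : 'M[C]_(m,n)) i j : ctr M i j = conjc (M j i).
Proof. by rewrite /ctr !mxE. Qed.

Definition ul n (A : 'M[C]_(1 + n)) : C := ulsubmx A 0 0.
Definition uu n (A : 'M[C]_(1 + n)) (x : 'cV[C]_n) : C := (ursubmx A *m x) 0 0.
Definition schur n (A : 'M[C]_(1 + n)) : 'M[C]_n :=
  drsubmx A - (ul A)^-1 *: (dlsubmx A *m ursubmx A).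

Lemma herm_blk n (A : 'M[C]_(1 + n)) : herm A ->
  [/\ dlsubmx A = ctr (ursubmx A), herm (drsubmx A) & conjc (ul A) = ul A].
Proof.
rewrite /herm -{1 2}(submxK A) ctr_block => /eq_block_mx [h1 h2 h3 h4].
split => //; try by rewrite -?h3 ?h2 ?ctrK.
by rewrite /ul -ctrE h1.
Qed.

Lemma blkE n (A : 'M[C]_(1 + n)) : herm A ->
  A = block_mx (ulsubmx A) (ursubmx A) (ctr (ursubmx A)) (drsubmx A).
Proof. by case/herm_blk => h1 _ _; rewrite -h1 submxK. Qed.

Lemma qf_schur n (A : 'M[C]_(1 + n)) t x : herm A -> ul A != 0 ->
  qf A (col_mx t%:M x) =
  ul A * ((t + uu A x / ul A) * conjc (t + uu A x / ul A)) + qf (schur A) x.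
Proof.
move=> hA nz; have [h1 h2 h3] := herm_blk hA.
rewrite {1}(blkE hA) qf_block /schur qfB qfZ h1 /qf.
have -> : (ctr x *m (ctr (ursubmx A) *m ursubmx A) *m x) 0 0
    = conjc (uu A x) * uu A x.
  rewrite mulmxA -ctrM -mulmxA /uu mxE big_ord1 ctrE; done.
rewrite rmorphD rmorphM /= conjc_inv h3.
rewrite /uu /ul.
rewrite /ul in nz h3.
field.
exact: nz.
Qed.
End S3.

Section S4.
Variable R : realType.
Local Notation C := (R[i]).

Lemma qf0 n (D : 'M[C]_n) : qf D 0 = 0.
Proof. by rewrite /qf mulmx0 mxE. Qed.

Lemma uu0 n (A : 'M[C]_(1 + n)) : uu A 0 = 0.
Proof. by rewrite /uu mulmx0 mxE. Qed.

Lemma col_neq0 n (t : C) (x : 'cV[C]_n) : x != 0 -> col_mx t%:M x != 0.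
Proof. by move=> nz; rewrite col_mx_eq0 negb_and nz orbT. Qed.

Lemma col1_neq0 n : col_mx (1 : C)%:M (0 : 'cV[C]_n) != 0.
Proof. by rewrite col_mx_eq0 negb_and (matrix_nonzero1 C 0). Qed.

Lemma pd_ul n (A : 'M[C]_(1 + n)) : pd A -> 0 < ul A.
Proof.
case=> hA pos; have H := pos _ (col1_neq0 n).
have z : (0 : 'M[C]_(1,1)) 0 0 = 0 by rewrite mxE.
move: H; rewrite {1}(blkE hA) qf_block mulmx0 qf0 conjc1 z conjc0 /ul.
by rewrite mulr0 mul0r !mul1r mulr1 !addr0.
Qed.

Lemma qf_col1 n (A : 'M[C]_(1 + n)) : herm A -> ul A != 0 ->
  qf A (col_mx 1%:M 0) = ul A.
Proof.
move=> hA nz; rewrite qf_schur // uu0 qf0 mul0r !addr0 conjc1.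
by rewrite !mulr1.
Qed.

End S4.

Section S4b.
Variable R : realType.
Local Notation C := (R[i]).
Lemma herm_schur n (A : 'M[C]_(1 + n)) : herm A -> herm (schur A).
Proof.
move=> hA; have [h1 h2 h3] := herm_blk hA.
by rewrite /herm /schur ctrB ctrZ ctrM h1 ctrK conjc_inv h3 (h2 : ctr _ = _).
Qed.

Lemma pd_schur n (A : 'M[C]_(1 + n)) : pd A -> pd (schur A).
Proof.
move=> pA; have a0 := pd_ul pA; case: pA => hA pos.
split; first exact: herm_schur.
move=> x nz; have := pos _ (col_neq0 (- (uu A x / ul A)) nz).
rewrite qf_schur ?lt0r_neq0 //.
by rewrite addNr mul0r mulr0 add0r.
Qed.

End S4b.

Section S4c.
Variable R : realType.
Local Notation C := (R[i]).
Lemma herm_add n (A B : 'M[C]_n) : herm A -> herm B -> herm (A + B).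
Proof. by rewrite /herm ctrD => -> ->. Qed.
Lemma herm_sub n (A B : 'M[C]_n) : herm A -> herm B -> herm (A - B).
Proof. by rewrite /herm ctrB => -> ->. Qed.

Lemma pd_mono n (A B : 'M[C]_n) : pd B -> psd (A - B) -> pd A.
Proof.
case=> hB pB [hAB pAB]; split.
  by have := herm_add hAB hB; rewrite subrK.
move=> x nz; have := pAB x; rewrite qfB subr_ge0 => le.
exact: lt_le_trans (pB x nz) le.
Qed.

End S4c.

Section S4d.
Variable R : realType.
Local Notation C := (R[i]).
Lemma schur_mono n (A B : 'M[C]_(1 + n)) : pd B -> psd (A - B) ->
  psd (schur A - schur B) /\ ul B <= ul A.
Proof.
move=> pB pAB; have pA := pd_mono pB pAB.
have aA := pd_ul pA; have aB := pd_ul pB.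
have nA : ul A != 0 by rewrite gt_eqF.
have nB : ul B != 0 by rewrite gt_eqF.
case: pA => hA _; case: (pB) => hB _; case: pAB => _ pAB.
split; last first.
  have := pAB (col_mx 1%:M 0); rewrite qfB (qf_col1 hA nA) (qf_col1 hB nB).
  by rewrite subr_ge0.
split; first by apply: herm_sub; apply: herm_schur.
move=> x; rewrite qfB subr_ge0.
have := pAB (col_mx (- (uu A x / ul A))%:M x).
rewrite qfB subr_ge0 (qf_schur _ _ hA nA) (qf_schur _ _ hB nB).
rewrite addNr mul0r mulr0 add0r => le; apply: le_trans le.
rewrite lerDr; apply: mulr_ge0; first exact: ltW.
exact: mulcJ_ge0.
Qed.
End S4d.

Section S4c.
Variable R : realType.
Local Notation C := (R[i]).
Lemma det_schur n (A : 'M[C]_(1 + n)) : ul A != 0 ->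
  \det A = ul A * \det (schur A).
Proof.
move=> nz.
have E : A = block_mx 1%:M 0 ((ul A)^-1 *: dlsubmx A) 1%:M
            *m block_mx (ulsubmx A) (ursubmx A) 0 (schur A).
  rewrite mulmx_block !mul1mx !mul0mx !addr0.
  have e : dlsubmx A *m ulsubmx A = ul A *: dlsubmx A.
    by rewrite {1}(mx11_scalar (ulsubmx A)) mul_mx_scalar.
  rewrite -!scalemxAl e scalerA mulVf // scale1r /schur addrC subrK.
  by rewrite submxK.
by rewrite {1}E det_mulmx det_lblock !det1 mul1r det_ublock det_mx11 mul1r.
Qed.
End S4c.

Section S5.
Variable R : realType.
Local Notation C := (R[i]).
Theorem det_mono n (A B : 'M[C]_n) : pd B -> psd (A - B) ->
  0 < \det B /\ \det B <= \det A.
Proof.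
elim: n A B => [|n IH] A B pB pAB.
  by rewrite !det_mx00 ltr01 lexx.
have pA := pd_mono pB pAB.
have [pS le_ul] := @schur_mono R n A B pB pAB.
have aA := @pd_ul R n A pA; have aB := @pd_ul R n B pB.
have [dB dle] := IH (schur A) (schur B) (@pd_schur R n B pB) pS.
have nA : ul A != 0 by rewrite gt_eqF.
have nB : ul B != 0 by rewrite gt_eqF.
rewrite (@det_schur R n A nA) (@det_schur R n B nB).
split; first exact: (mulr_gt0 aB dB).
exact: (ler_pM (ltW aB) (ltW dB) le_ul dle).
Qed.
End S5.

Section S6.
Variable R : realType.
Local Notation C := (R[i]).

Lemma herm1 n : herm (1%:M : 'M[C]_n).
Proof. exact: ctr1. Qed.
Lemma hermZ n (c : C) (A : 'M[C]_n) : conjc c = c -> herm A -> herm (c *: A).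
Proof. by rewrite /herm ctrZ => -> ->. Qed.
Lemma herm_inv n (A : 'M[C]_n) : herm A -> herm (invmx A).
Proof. by rewrite /herm ctr_inv => ->. Qed.
Lemma herm_conj m n (H : 'M[C]_(n,m)) K : herm K -> herm (H *m K *m ctr H).
Proof. by rewrite /herm !ctrM ctrK => ->; rewrite mulmxA. Qed.

Lemma qf_conj m n (H : 'M[C]_(n,m)) K x : qf (H *m K *m ctr H) x = qf K (ctr H *m x).
Proof. by rewrite /qf ctrM ctrK !mulmxA. Qed.

Lemma realC_conj (r : R) : conjc (r%:C)%C = (r%:C)%C.
Proof. exact: conjc_real. Qed.

Lemma psd_gram m n (r : R) (H : 'M[C]_(n,m)) K : 0 <= r -> psd K -> psd (gram r H K).
Proof.
move=> r0 [hK pK]; split; first by apply: hermZ; [exact: conjc_real| exact: herm_conj].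
move=> x; rewrite /gram qfZ qf_conj; apply: mulr_ge0 => //; by rewrite ler0c.
Qed.

Lemma psd_pd n (A : 'M[C]_n) : pd A -> psd A.
Proof. by case=> h p; split => // x; case: (eqVneq x 0) => [->|/p/ltW //]; rewrite qf0. Qed.

Lemma pd1 n : pd (1%:M : 'M[C]_n).
Proof. by split; [exact: herm1 | move=> x; exact: qf1_gt0]. Qed.

Lemma psd0 n : psd (0 : 'M[C]_n).
Proof.
split; first by apply/matrixP=> i j; rewrite /ctr !mxE conjc0.
by move=> x; rewrite /qf mulmx0 mul0mx mxE.
Qed.

Lemma psd_add n (A B : 'M[C]_n) : psd A -> psd B -> psd (A + B).
Proof. case=> hA pA [hB pB]; split; [exact: herm_add | move=> x; rewrite qfD addr_ge0 //]. Qed.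

Lemma pd_addl n (A B : 'M[C]_n) : pd A -> psd B -> pd (A + B).
Proof. by move=> pA pB; apply: (pd_mono pA); rewrite addrC addKr. Qed.

Lemma pd_det n (A : 'M[C]_n) : pd A -> 0 < \det A.
Proof. by move=> pA; case: (det_mono pA (_ : psd (A - A))) => //; rewrite subrr; exact: psd0. Qed.

Lemma pd_unit n (A : 'M[C]_n) : pd A -> A \in unitmx.
Proof. by move=> pA; rewrite unitmxE unitfE gt_eqF // pd_det. Qed.

Lemma pd_inv n (A : 'M[C]_n) : pd A -> pd (invmx A).
Proof.
move=> pA; have uA := pd_unit pA; case: pA => hA pA.
split; first exact: herm_inv.
move=> x nz; have ex : x = A *m (invmx A *m x) by rewrite mulKVmx.
have ny : invmx A *m x != 0.
  by apply: contraNneq nz => e; rewrite ex e mulmx0.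
have := pA _ ny; congr (0 < _).
rewrite /qf {3 4}ex ctrM (hA : ctr A = A).
by rewrite (mulmxK uA) !mulmxA.
Qed.
End S6.

Section S7.
Variable R : realType.
Local Notation C := (R[i]).

Lemma psd1 n : psd (1%:M : 'M[C]_n).
Proof. by apply: psd_pd; apply: pd1. Qed.

Lemma pd_I_gram m n (r : R) (H : 'M[C]_(n,m)) : 0 <= r -> pd (1%:M + gram r H 1%:M).
Proof. by move=> r0; apply: pd_addl; [exact: pd1 | apply: psd_gram => //; exact: psd1]. Qed.

Lemma Pmx_gram m n (r : R) (H : 'M[C]_(n,m)) : Pmx r H = 1%:M + gram r (ctr H) 1%:M.
Proof. by rewrite /Pmx /gram mulmx1 ctrK. Qed.

Lemma pd_Pmx m n (r : R) (H : 'M[C]_(n,m)) : 0 <= r -> pd (Pmx r H).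
Proof. by move=> r0; rewrite Pmx_gram; exact: pd_I_gram. Qed.

Lemma gram_invP m n (r : R) (H : 'M[C]_(n,m)) : 0 <= r ->
  1%:M - gram r H (invmx (Pmx r H)) = invmx (1%:M + gram r H 1%:M).
Proof.
move=> r0; set P := Pmx r H; set Q := 1%:M + gram r H 1%:M.
have uP : P \in unitmx by apply: pd_unit; exact: pd_Pmx.
have uQ : Q \in unitmx by apply: pd_unit; exact: pd_I_gram.
have QH : Q *m H = H *m P.
  rewrite /Q /P /Pmx /gram mulmx1 mulmxDl mulmxDr mul1mx mulmx1.
  by rewrite -!scalemxAl -!scalemxAr !mulmxA.
have HP : H *m invmx P = invmx Q *m H.
  by rewrite -[H *m invmx P](mulKmx uQ) (mulmxA Q) QH (mulmxK uP).
have EQ : gram r H 1%:M = Q - 1%:M by rewrite /Q addrC addKr.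
rewrite /gram HP -mulmxA scalemxAr.
have -> : (r%:C)%C *: (H *m ctr H) = gram r H 1%:M by rewrite /gram mulmx1.
by rewrite EQ mulmxBr (mulVmx uQ) mulmx1 opprB addrC subrK.
Qed.

Lemma psd_1_gram m n (r : R) (H : 'M[C]_(n,m)) : 0 <= r ->
  psd (1%:M - gram r H (invmx (Pmx r H))).
Proof. by move=> r0; rewrite gram_invP //; apply: psd_pd; apply: pd_inv; exact: pd_I_gram. Qed.
End S7.

Section S8.
Variable R : realType.

Lemma real_log_bound n (x1 x2 x3 : R) : 0 < x1 -> 0 < x2 -> 0 < x3 ->
  x3 <= (1 + 1) ^+ n * x1 -> x2 <= (1 + 1) ^+ n ->
  log2 x3 - n%:R *+ 2 <= log2 x1 - log2 x2.
Proof.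
move=> p1 p2 p3 h3 h2.
have p2' : (0 : R) < 1 + 1 by lra.
have pn : (0 : R) < (1 + 1) ^+ n by apply: exprn_gt0.
have L0 : 0 < ln (1 + 1 : R) by apply: ln_gt0; lra.
have e1 : ln x3 <= ln (1 + 1 : R) *+ n + ln x1.
  have pm : 0 < (1 + 1) ^+ n * x1 by apply: mulr_gt0.
  by rewrite -lnXn // -lnM ?posrE // ler_ln ?posrE.
have e2 : ln x2 <= ln (1 + 1 : R) *+ n.
  by rewrite -lnXn // ler_ln // posrE.
set L := ln (1 + 1 : R) in L0 e1 e2 *.
have E : (n%:R *+ 2 : R) = (L *+ n *+ 2) / L.
  by rewrite -[L *+ n]mulr_natl -mulrnAl mulfK // gt_eqF.
rewrite E /log2 (_ : (2 : R) = 1 + 1) // -/L.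
rewrite -!mulrBl ler_pM2r ?invr_gt0 //.
move: e1 e2; generalize (L *+ n) => y e1 e2.
rewrite mulr2n; lra.
Qed.
End S8.

Section S9.
Variable R : realType.
Local Notation C := (R[i]).
Definition half : C := ((1/2 : R)%:C)%C.

Lemma two_C : (1 + 1 : C) = ((1 + 1 : R)%:C)%C.
Proof. by rewrite rmorphD rmorph1. Qed.
Lemma half2 : (1 + 1 : C) * half = 1.
Proof. by rewrite two_C /half -rmorphM /= (_ : (1 + 1) * (1 / 2) = 1 :> R) ?rmorph1 //; lra. Qed.
Lemma half_ge0 : 0 <= half.
Proof. by rewrite /half ler0c; lra. Qed.
Lemma half_le1 : half <= 1.
Proof. by rewrite /half -(rmorph1 (real_complex R)) lecR; lra. Qed.
Lemma half_conj : conjc half = half.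
Proof. exact: conjc_real. Qed.
Lemma two_conj : conjc (1 + 1 : C) = 1 + 1.
Proof. by rewrite rmorphD rmorph1. Qed.
Lemma two_ge0 : (0 : C) <= 1 + 1.
Proof. by rewrite addr_ge0 ?ler01. Qed.

Lemma psd_scale n (c : C) (K : 'M[C]_n) : 0 <= c -> conjc c = c -> psd K -> psd (c *: K).
Proof. move=> c0 cc [hK pK]; split; [exact: hermZ | move=> x; rewrite qfZ mulr_ge0 //]. Qed.

Lemma herm_scalar n (c : C) : conjc c = c -> herm (c%:M : 'M[C]_n).
Proof. by move=> cc; rewrite /herm ctr_scalar cc. Qed.

Lemma qf_scalar n (c : C) (x : 'cV[C]_n) : qf c%:M x = c * qf 1%:M x.
Proof. by rewrite (_ : c%:M = c *: 1%:M) ?qfZ // scalemx1. Qed.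

Lemma S_bound n (G : 'M[C]_n) : psd G -> psd (1%:M - G) ->
  [/\ pd (1%:M + half *: G), psd (1%:M + half *: G - 1%:M)
    & \det (1%:M + half *: G) <= (1 + 1) ^+ n].
Proof.
move=> pG p1G.
have pS : psd (half *: G) by apply: psd_scale => //; [exact: half_ge0 | exact: half_conj].
split; first by apply: pd_addl => //; exact: pd1.
  by rewrite addrC addKr.
have pdS : pd (1%:M + half *: G) by apply: pd_addl => //; exact: pd1.
suff pU : psd ((1 + 1)%:M - (1%:M + half *: G)).
  by have [_ le] := det_mono pdS pU; move: le; rewrite det_scalar.
case: pG => hG qG; case: p1G => _ q1G.
split.
  apply: herm_sub; first exact: herm_scalar two_conj.
  by apply: herm_add; [exact: herm1 | apply: hermZ => //; exact: half_conj].
move=> x; rewrite qfB qfD qfZ qf_scalar.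
have := q1G x; rewrite qfB subr_ge0 => le1.
rewrite mulrDl mul1r opprD addrA addrK subr_ge0.
apply: le_trans le1; apply: ler_piMl; [exact: qG | exact: half_le1].
Qed.
End S9.

Arguments half {R}.
Section S10.
Variable R : realType.
Local Notation C := (R[i]).

Lemma det_term n (S A B : 'M[C]_n) : pd S -> psd (S - 1%:M) -> psd B ->
  psd (A - half *: B) ->
  [/\ 0 < \det (S + A), 0 < \det (1%:M + B)
    & \det (1%:M + B) <= (1 + 1) ^+ n * \det (S + A)].
Proof.
move=> pS pS1 pB pAB.
have phB : psd (half *: B) by apply: psd_scale => //; [exact: half_ge0 | exact: half_conj].
have pA : psd A by have := psd_add pAB phB; rewrite subrK.
have pdSA : pd (S + A) by exact: pd_addl.
have pd1B : pd (1%:M + B) by apply: pd_addl => //; exact: pd1.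
split; [exact: pd_det | exact: pd_det |].
rewrite -detZ.
suff pU : psd ((1 + 1) *: (S + A) - (1%:M + B)) by case: (det_mono pd1B pU).
case: pS => hS _; case: pA => hA _; case: pB => hB qB; case: pS1 => _ qS1.
case: pAB => _ qAB.
split.
  apply: herm_sub; last by apply: herm_add => //; exact: herm1.
  by apply: hermZ; [exact: two_conj | exact: herm_add].
move=> x; rewrite qfB qfZ !qfD.
have := qS1 x; rewrite qfB => h1.
have := qAB x; rewrite qfB qfZ => h2.
have q1 := qf1_ge0 x.
have h3 := qB x.
set a := qf S x in h1 *; set b := qf A x in h2 *; set c := qf B x in h2 h3 *.
set d := qf 1%:M x in h1 q1 *.
have -> : (1 + 1) * (a + b) - (d + c) =
    (1 + 1) * (a - d) + (1 + 1) * (b - half * c) + d + ((1 + 1) * half - 1) * c.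
  by ring.
rewrite half2 subrr mul0r addr0.
by rewrite !addr_ge0 // mulr_ge0 // two_ge0.
Qed.

Lemma posC (z : C) : 0 < z -> z = ((complex.Re z)%:C)%C /\ 0 < complex.Re z.
Proof. by case: z => a b; rewrite ltcE /= => /andP [/eqP -> h]. Qed.

Lemma two_powC n : (1 + 1 : C) ^+ n = (((1 + 1 : R) ^+ n)%:C)%C.
Proof. by rewrite two_C rmorphXn. Qed.

Lemma term n (S A B : 'M[C]_n) : pd S -> psd (S - 1%:M) -> \det S <= (1 + 1) ^+ n ->
  psd B -> psd (A - half *: B) ->
  logdet (1%:M + B) - n%:R *+ 2 <= logdet (S + A) - logdet S.
Proof.
move=> pS pS1 dS pB pAB.
have [d1 d3 le] := det_term pS pS1 pB pAB.
have d2 := pd_det pS.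
have [e1 r1] := posC d1; have [e2 r2] := posC d2; have [e3 r3] := posC d3.
rewrite /logdet; apply: real_log_bound => //.
  by move: le; rewrite e1 e3 two_powC -rmorphM lecR.
by move: dS; rewrite e2 two_powC lecR.
Qed.
End S10.

Lemma zmod3 (V : zmodType) (a k b : V) : a + k + b - (b + a) = k.
Proof. by apply/eqP; rewrite subr_eq [b + a]addrC addrA [k + a]addrC. Qed.
Section S11.
Variable R : realType.
Local Notation C := (R[i]).

Lemma gramD m n (r : R) (H : 'M[C]_(n,m)) K K' : gram r H (K + K') = gram r H K + gram r H K'.
Proof. by rewrite /gram mulmxDr mulmxDl scalerDr. Qed.
Lemma gramZ m n (r : R) (H : 'M[C]_(n,m)) (c : C) K : gram r H (c *: K) = c *: gram r H K.
Proof. by rewrite /gram -scalemxAr -scalemxAl !scalerA mulrC. Qed.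

Definition Sgood n (S : 'M[C]_n) := [/\ pd S, psd (S - 1%:M) & \det S <= (1 + 1) ^+ n].

Lemma Sgood_S m n (r : R) (H : 'M[C]_(n,m)) : 0 <= r ->
  Sgood (1%:M + gram r H (half *: invmx (Pmx r H))).
Proof.
move=> r0; rewrite gramZ.
have pG : psd (gram r H (invmx (Pmx r H))).
  by apply: psd_gram => //; apply: psd_pd; apply: pd_inv; exact: pd_Pmx.
by have [] := S_bound pG (psd_1_gram H r0).
Qed.

Lemma psd_halfinv m n (r : R) (H : 'M[C]_(n,m)) : 0 <= r -> psd (half *: invmx (Pmx r H)).
Proof.
move=> r0; apply: psd_scale; [exact: half_ge0 | exact: half_conj |].
by apply: psd_pd; apply: pd_inv; exact: pd_Pmx.
Qed.

Lemma psd_invP m n (r : R) (H : 'M[C]_(n,m)) : 0 <= r -> psd (invmx (Pmx r H)).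
Proof. by move=> r0; apply: psd_pd; apply: pd_inv; exact: pd_Pmx. Qed.

Lemma termS n (S A B : 'M[C]_n) : Sgood S -> psd B -> psd (A - half *: B) ->
  logdet (1%:M + B) - n%:R *+ 2 <= logdet (S + A) - logdet S.
Proof. by case=> ? ? ?; apply: term. Qed.

Lemma tA n m (S : 'M[C]_n) (r : R) (H : 'M[C]_(n,m)) Kp : Sgood S -> 0 <= r -> psd Kp ->
  logdet (1%:M + gram r H 1%:M) - n%:R *+ 2 <=
  logdet (S + gram r H (half *: 1%:M + Kp)) - logdet S.
Proof.
move=> hS r0 pK; apply: termS => //; first by apply: psd_gram => //; exact: psd1.
by rewrite gramD gramZ addrC addKr; apply: psd_gram.
Qed.

Lemma tB n m m' (S : 'M[C]_n) (r : R) (H : 'M[C]_(n,m)) (r' : R) (H' : 'M[C]_(n,m')) Kp :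
  Sgood S -> 0 <= r -> 0 <= r' -> psd Kp ->
  logdet (1%:M + gram r' H' 1%:M + gram r H 1%:M) - n%:R *+ 2 <=
  logdet (S + gram r H (half *: 1%:M + Kp) + gram r' H' (half *: 1%:M)) - logdet S.
Proof.
move=> hS r0 r0' pK; rewrite -!addrA; apply: termS => //.
  by apply: psd_add; apply: psd_gram => //; exact: psd1.
rewrite gramD !gramZ scalerDr.
rewrite (_ : _ - _ = gram r H Kp); first by apply: psd_gram.
by rewrite zmod3.
Qed.

Lemma tC n m (S : 'M[C]_n) (r : R) (H : 'M[C]_(n,m)) P : Sgood S -> 0 <= r -> psd P ->
  logdet (1%:M + gram r H P) - n%:R *+ 2 <=
  logdet (S + gram r H (half *: P)) - logdet S.
Proof.
move=> hS r0 pP; apply: termS => //; first by apply: psd_gram.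
by rewrite gramZ subrr; exact: psd0.
Qed.

Lemma tD n m m' (S : 'M[C]_n) (r : R) (H : 'M[C]_(n,m)) (r' : R) (H' : 'M[C]_(n,m')) P :
  Sgood S -> 0 <= r -> 0 <= r' -> psd P ->
  logdet (1%:M + gram r H P + gram r' H' 1%:M) - n%:R *+ 2 <=
  logdet (S + gram r H (half *: P) + gram r' H' (half *: 1%:M)) - logdet S.
Proof.
move=> hS r0 r0' pP; rewrite -!addrA; apply: termS => //.
  by apply: psd_add; apply: psd_gram => //; exact: psd1.
by rewrite !gramZ scalerDr subrr; exact: psd0.
Qed.

Lemma tD' n m m' (S : 'M[C]_n) (r : R) (H : 'M[C]_(n,m)) (r' : R) (H' : 'M[C]_(n,m')) P :
  Sgood S -> 0 <= r -> 0 <= r' -> psd P ->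
  logdet (1%:M + gram r' H' 1%:M + gram r H P) - n%:R *+ 2 <=
  logdet (S + gram r H (half *: P) + gram r' H' (half *: 1%:M)) - logdet S.
Proof. by move=> *; rewrite addrAC; apply: tD. Qed.
End S11.

Section Arith.
Variable R : realType.
Lemma L1 (x t y s : R) : x <= t -> t - y <= s -> x - y <= s.
Proof. move=> *; lra. Qed.
Lemma L2a (q1 q2 t1 t2 y1 y2 s1 s2 : R) : q1 + q2 <= t1 + t2 -> t1 - y2 <= s1 -> t2 - y1 <= s2 ->
  q1 - y1 + (q2 - y2) <= s1 + s2.
Proof. move=> *; lra. Qed.
Lemma L2b (q1 q2 t1 t2 y1 y2 s1 s2 : R) : q1 + q2 <= t1 + t2 -> t1 - y1 <= s1 -> t2 - y2 <= s2 ->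
  q1 - y1 + (q2 - y2) <= s1 + s2.
Proof. move=> *; lra. Qed.
Lemma L3 (q1 q2 t1 t2 t3 y1 y2 s1 s2 s3 : R) : q1 *+ 2 + q2 <= t1 + t2 + t3 ->
  t1 - y1 <= s1 -> t2 - y2 <= s3 -> t3 - y1 <= s2 ->
  (q1 - y1) *+ 2 + (q2 - y2) <= s1 + s2 + s3.
Proof. move=> *; lra. Qed.
Lemma L4 (q1 q2 t1 t2 t3 y1 y2 s1 s2 s3 : R) : q1 + q2 *+ 2 <= t1 + t2 + t3 ->
  t1 - y2 <= s1 -> t3 - y2 <= s2 -> t2 - y1 <= s3 ->
  q1 - y1 + (q2 - y2) *+ 2 <= s1 + s2 + s3.
Proof. move=> *; lra. Qed.
End Arith.

Unset Implicit Arguments.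
Theorem lemma2 (R : realType) (M1 M2 N1 N2 : nat)
  (H11 : 'M[R[i]]_(N1, M1)) (H12 : 'M[R[i]]_(N2, M1))
  (H21 : 'M[R[i]]_(N1, M2)) (H22 : 'M[R[i]]_(N2, M2))
  (r11 r12 r21 r22 : R) :
  0 <= r11 -> 0 <= r12 -> 0 <= r21 -> 0 <= r22 ->
  let K11 : 'M[R[i]]_M1 := ((1/2 : R)%:C)%C *: 1%:M in
  let K21 : 'M[R[i]]_M2 := ((1/2 : R)%:C)%C *: 1%:M in
  let K12 : 'M[R[i]]_M1 := ((1/2 : R)%:C)%C *: invmx (Pmx r12 H12) in
  let K22 : 'M[R[i]]_M2 := ((1/2 : R)%:C)%C *: invmx (Pmx r21 H21) in
  forall R1 R2 : R, 0 <= R1 -> 0 <= R2 ->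
  shift_region (Rc H11 H12 H21 H22 r11 r12 r21 r22) (N1%:R *+ 2) (N2%:R *+ 2) (R1, R2) ->
  HK_region H11 H12 H21 H22 r11 r12 r21 r22 K11 K12 K21 K22 (R1, R2).
Proof.
move=> p11 p12 p21 p22 K11 K21 K12 K22 R1 R2 g1 g2 [[Q1 Q2] [HR E]].
case: E => -> -> in g1 g2 *.
case: HR => /= _ [_ [c1 [c2 [c3 [c4 [c5 [c6 c7]]]]]]].
have S1g := Sgood_S H21 p21.
have S2g := Sgood_S H12 p12.
have pK12 := psd_halfinv H12 p12.
have pK22 := psd_halfinv H21 p21.
have pI12 := psd_invP H12 p12.
have pI21 := psd_invP H21 p21.
have a1 := tA H11 S1g p11 pK12.
have a2 := tA H22 S2g p22 pK22.
have b1 := tB H11 H21 S1g p11 p21 pK12.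
have b2 := tB H22 H12 S2g p22 p12 pK22.
have cc1 := tC H11 S1g p11 pI12.
have cc2 := tC H22 S2g p22 pI21.
have d1 := tD H11 H21 S1g p11 p21 pI12.
have d2 := tD H22 H12 S2g p22 p12 pI21.
have d1' := tD' H11 H21 S1g p11 p21 pI12.
have d2' := tD' H22 H12 S2g p22 p12 pI21.
rewrite /HK_region /= /K11 /K12 /K21 /K22.
rewrite /half in a1 a2 b1 b2 cc1 cc2 d1 d2 d1' d2' S1g S2g.
split; first exact: g1.
split; first exact: g2.
split; first exact: L1 c1 a1.
split; first exact: L1 c2 a2.
split; first exact: L2b c4 b1 cc2.
split; first exact: L2a c3 b2 cc1.
split; first exact: L2b c5 d1 d2'.
split; first exact: L3 c6 b1 d2' cc1.
exact: L4 c7 b2 cc2 d1'.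
Qed.
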